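(* Let $\Gamma\colon\mathbb{R}^d\to\mathbb{R}$ be differentiable with uniformly Lipschitz gradient, let $\varepsilon>0$, and define $\mathcal Y^{\mathrm n}(\theta,\xi)=\frac{1}{\epsilon(\theta)}\Gamma(\theta+\epsilon(\theta)\xi)$ for $\theta\in\mathbb{R}^d$, $\xi\in\mathbb{R}^m$ (here $m=d$). Suppose either (i) $\epsilon(\theta)=\varepsilon\sqrt{1+\|\theta-\theta^{\mathrm{ctr}}\|^2/\sigma_p^2}$ for fixed $\theta^{\mathrm{ctr}}\in\mathbb{R}^d$, $\sigma_p>0$; or (ii) $\epsilon(\theta)=\varepsilon\sqrt{1+\Gamma(\theta)-\Gamma^-}$, where $\Gamma^-$ is a constant with $\Gamma(\theta)\ge\Gamma^-$ for all $\theta$, and there is $\delta>0$ such that $\|\nabla\Gamma(\theta)\|\ge\delta\|\theta\|$ whenever $\|\theta\|\ge\delta^{-1}$. Then for every bounded set $S\subset\mathbb{R}^m$ there is $L<\infty$ such that $|\mathcal Y^{\mathrm n}(\theta',\xi)-\mathcal Y^{\mathrm n}(\theta,\xi)|\le L\|\theta'-\theta\|$ for all $\theta,\theta'\in\mathbb{R}^d$ and all $\xi\in S$.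
   Context: The function $\mathcal Y^{\mathrm n}$ is the normalized observation used in quasi-stochastic gradient descent / extremum seeking control with state-dependent probing gain $\epsilon(\theta)$; the probing signal $\xi$ takes values in a bounded set. *)

(* Defs.v *)
From HB Require Import structures.
From mathcomp Require Import all_boot all_order all_algebra.
From mathcomp Require Import all_classical all_reals all_analysis.
Set Implicit Arguments. Unset Strict Implicit. Unset Printing Implicit Defensive.
Import Order.TTheory GRing.Theory Num.Theory.
Import numFieldNormedType.Exports.
Local Open Scope ring_scope.

Definition dotv {R : realType} {d : nat} (u v : 'rV[R]_d) : R :=
  \sum_(i < d) u 0 i * v 0 i.
Definition enorm {R : realType} {d : nat} (v : 'rV[R]_d) : R :=
  Num.sqrt (dotv v v).

Definition gradient {R : realType} {d : nat} (G : 'rV[R]_d -> R)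
  (th : 'rV[R]_d) : 'rV[R]_d :=
  \row_(i < d) ('d G th) (delta_mx 0 i).

Definition Yn {R : realType} {d : nat} (G : 'rV[R]_d -> R) (eps : 'rV[R]_d -> R)
  (th xi : 'rV[R]_d) : R :=
  (eps th)^-1 * G (th + eps th *: xi).

Definition eps_i {R : realType} {d : nat} (veps : R) (thctr : 'rV[R]_d) (sigp : R)
  (th : 'rV[R]_d) : R :=
  veps * Num.sqrt (1 + enorm (th - thctr) ^+ 2 / sigp ^+ 2).

Definition eps_ii {R : realType} {d : nat} (veps : R) (G : 'rV[R]_d -> R) (Gminus : R)
  (th : 'rV[R]_d) : R :=
  veps * Num.sqrt (1 + G th - Gminus).

(* Main.v *)
Require Import Defs.
From HB Require Import structures.
From mathcomp Require Import all_boot all_order all_algebra.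
From mathcomp Require Import all_classical all_reals all_analysis.
From mathcomp Require Import ring lra.
Import Order.TTheory GRing.Theory Num.Theory.
Import numFieldNormedType.Exports.
Local Open Scope ring_scope.
Local Open Scope classical_set_scope.

Section S.
Context {R : realType} {d : nat}.
Implicit Types (u v x : 'rV[R]_d).

Lemma dG_dot (G : 'rV[R]_d -> R) p v : differentiable G p ->
  'd G p v = dotv (gradient G p) v.
Proof.
move=> _; rewrite {1}(row_sum_delta v) linear_sum /dotv.
apply: eq_bigr => i _; rewrite linearZ /= mxE mulrC.
by [].
Qed.

Lemma mvt (G : 'rV[R]_d -> R) x v : (forall p, differentiable G p) ->
  exists2 c : R, 0 <= c <= 1 & G (x + v) - G x = dotv (gradient G (x + c *: v)) v.
Proof.
move=> dG.
pose f := fun t : R => G (x + t *: v).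
have Hd : forall t : R, is_derive t (1:R) f ('d G (x + t *: v) v).
  move=> t; move: (t : R) => {}t.
  have E : (fun h : R => h^-1 *: ((f \o shift t) (h *: 1) - f t)) =
           (fun h : R => h^-1 *: ((G \o shift (x + t *: v)) (h *: v) - G (x + t *: v))).
    apply/funext => h /=; rewrite /f; congr (_ *: (G _ - _)).
    by rewrite scaler1 scalerDl addrCA addrA. 
  have dv : derivable G (x + t *: v) v by apply: diff_derivable.
  apply: DeriveDef; first by rewrite /derivable E.
  by rewrite /derive E -/(derive G (x + t *: v) v) deriveE.
have cf : continuous f.
  move=> t; have [h _] := Hd t.
  apply: differentiable_continuous; exact/derivable1_diffP.
have [c c01 Hc] := @MVT_segment R f (fun t => 'd G (x + t *: v) v) 0 1 ler01
   (fun t _ => Hd t) (continuous_subspaceT cf).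
exists c; first by move: c01; rewrite in_itv.
by move: Hc; rewrite /f scale0r addr0 scale1r subr0 mulr1 dG_dot.
Qed.
End S.


Section N.
Context {R : realType} {d : nat}.
Implicit Types (u v w : 'rV[R]_d).

Lemma dotvC u v : dotv u v = dotv v u.
Proof. by apply: eq_bigr => i _; rewrite mulrC. Qed.
Lemma dotvDl u v w : dotv (u + v) w = dotv u w + dotv v w.
Proof. by rewrite /dotv -big_split; apply: eq_bigr => i _; rewrite mxE mulrDl. Qed.
Lemma dotvZl a u w : dotv (a *: u) w = a * dotv u w.
Proof. by rewrite /dotv mulr_sumr; apply: eq_bigr => i _; rewrite mxE mulrA. Qed.
Lemma dotvNl u w : dotv (- u) w = - dotv u w.
Proof. by rewrite -scaleN1r dotvZl mulN1r. Qed.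
Lemma dotvDr u v w : dotv w (u + v) = dotv w u + dotv w v.
Proof. by rewrite !(dotvC w) dotvDl. Qed.
Lemma dotvZr a u w : dotv w (a *: u) = a * dotv w u.
Proof. by rewrite !(dotvC w) dotvZl. Qed.
Lemma dotvNr u w : dotv w (- u) = - dotv w u.
Proof. by rewrite !(dotvC w) dotvNl. Qed.
Lemma dotvv_ge0 u : 0 <= dotv u u.
Proof. by apply: sumr_ge0 => i _; rewrite -expr2 sqr_ge0. Qed.
Lemma dotvv_eq0 u : dotv u u = 0 -> forall w, dotv u w = 0.
Proof.
move=> /eqP; rewrite psumr_eq0; last by move=> i _; rewrite -expr2 sqr_ge0.
move=> /allP H w; apply: big1 => i _.
have /implyP := H i (mem_index_enum i) => /(_ isT).
by rewrite mulf_eq0 orbb => /eqP ->; rewrite mul0r.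
Qed.

Lemma CS u v : dotv u v ^+ 2 <= dotv u u * dotv v v.
Proof.
have := dotvv_ge0 (dotv v v *: u - dotv u v *: v).
rewrite !(dotvDl, dotvNl, dotvZl, dotvDr, dotvNr, dotvZr) (dotvC v u).
set a := dotv u u; set b := dotv u v; set c := dotv v v => H.
have c0 : 0 <= c by apply: dotvv_ge0.
case: (ltrgt0P c) c0 => // [cp|c0] _.
  have : 0 <= c * (a * c - b ^+ 2) by nra.
  rewrite pmulr_rge0 // subr_ge0 => ?; nra.
have b0 : b = 0 by rewrite /b dotvC; apply: dotvv_eq0.
by rewrite b0 c0 expr2 !mulr0.
Qed.

Lemma enorm_ge0 u : 0 <= enorm u.
Proof. exact: sqrtr_ge0. Qed.
Lemma enorm_sq u : enorm u ^+ 2 = dotv u u.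
Proof. by rewrite sqr_sqrtr // dotvv_ge0. Qed.
Lemma dot_le u v : `|dotv u v| <= enorm u * enorm v.
Proof.
rewrite -(ler_pXn2r (_ : (0 < 2)%N)) ?nnegrE ?mulr_ge0 ?enorm_ge0 //.
by rewrite real_normK ?num_real // exprMn !enorm_sq CS.
Qed.
Lemma enormD u v : enorm (u + v) <= enorm u + enorm v.
Proof.
rewrite -(ler_pXn2r (_ : (0 < 2)%N)) ?nnegrE ?addr_ge0 ?enorm_ge0 //.
rewrite enorm_sq !(dotvDl, dotvDr) (dotvC v u) sqrrD !enorm_sq.
have := dot_le u v; have := ler_norm (dotv u v); lra.
Qed.
Lemma enormZ a u : enorm (a *: u) = `|a| * enorm u.
Proof.
rewrite /enorm dotvZl dotvZr mulrA -expr2 sqrtrM ?sqr_ge0 //.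
by rewrite sqrtr_sqr.
Qed.
Lemma enormN u : enorm (- u) = enorm u.
Proof. by rewrite -scaleN1r enormZ normrN1 mul1r. Qed.
Lemma enorm0 : enorm (0 : 'rV[R]_d) = 0.
Proof. by rewrite -(scale0r 0) enormZ normr0 mul0r. Qed.
Lemma enormB u v : enorm u - enorm v <= enorm (u - v).
Proof. have := enormD (u - v) v; rewrite subrK; lra. Qed.
Lemma enorm_tri u v : enorm v <= enorm u + enorm (v - u).
Proof. by have := enormD u (v - u); rewrite addrC subrK. Qed.
Lemma enormBC u v : enorm (u - v) = enorm (v - u).
Proof. by rewrite -enormN opprB. Qed.
Lemma enorm_tri3 c u v : enorm (v - c) <= enorm (u - c) + enorm (v - u).
Proof.
have := enormD (u - c) (v - u).
by rewrite [u - c + _]addrC addrA subrK.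
Qed.
End N.


Section M.
Context {R : realType} {d : nat}.

Lemma main_abs (G e : 'rV[R]_d -> R) (A K Le c M : R) :
  0 <= A -> 0 <= K -> 0 <= Le -> 0 < c -> 0 <= M ->
  (forall x, 0 < e x) ->
  (forall x y, `|e y - e x| <= Le * enorm (y - x)) ->
  (forall x, c * (1 + enorm x) <= e x) ->
  (forall y u, `|G (y + u) - G y| <= (A + K * enorm y + K * enorm u) * enorm u) ->
  exists L, forall th th' xi, enorm xi <= M ->
    `|Yn G e th' xi - Yn G e th xi| <= L * enorm (th' - th).
Proof.
move=> A0 K0 Le0 c0 M0 ep eL ec Gs.
set E0 := e 0.
set C2 := 1 + E0 * M + Le * M.
set C3 := `|G 0| + A * C2 + K * C2 ^+ 2.
have E00 : 0 <= E0 by exact/ltW/ep.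
have C20 : 1 <= C2 by rewrite /C2; nra.
have C30 : 0 <= C3 by rewrite /C3; have := normr_ge0 (G 0); nra.
exists ((A + 3 * K * C2) * (1 + Le * M) / c + C3 * Le / c ^+ 2).
suff H : forall th th' xi, enorm xi <= M -> enorm th <= enorm th' ->
    `|Yn G e th' xi - Yn G e th xi| <=
    ((A + 3 * K * C2) * (1 + Le * M) / c + C3 * Le / c ^+ 2) * enorm (th' - th).
  move=> th th' xi xM; case: (leP (enorm th) (enorm th')) => hab; first exact: H.
  rewrite distrC (_ : enorm (th' - th) = enorm (th - th')); last by rewrite -enormN opprB.
  apply: H => //; exact: ltW.
move=> th th' xi xM hab.
set a := enorm th; set b := enorm th'; set D := enorm (th' - th).
set e1 := e th; set e2 := e th'.
set y := th + e1 *: xi; set y' := th' + e2 *: xi; set u := y' - y.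
have a0 : 0 <= a by apply: enorm_ge0.
have {}hab : a <= b by [].
have D0 : 0 <= D by apply: enorm_ge0.
have xi0 : 0 <= enorm xi by apply: enorm_ge0.
have e10 : 0 < e1 by apply: ep.
have e20 : 0 < e2 by apply: ep.
have F1 : e1 <= E0 + Le * a.
  have := eL 0 th; rewrite subr0 -/a -/e1 -/E0 => h.
  have := ler_norm (e1 - E0); lra.
have F3 : `|e2 - e1| <= Le * D by apply: eL.
have ec1 : c * (1 + a) <= e1 by apply: ec.
have ec2 : c * (1 + b) <= e2 by apply: ec.
have F4 : enorm y <= C2 * (1 + a).
  rewrite /y; apply: (le_trans (enormD _ _)); rewrite enormZ gtr0_norm // -/a.
  have : e1 * enorm xi <= (E0 + Le * a) * M.
    apply: ler_pM => //; exact: ltW.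
  have := mulr_ge0 (mulr_ge0 E00 M0) a0; have := mulr_ge0 Le0 M0.
  rewrite /C2; nra.
have F5 : enorm y' <= C2 * (1 + b).
  rewrite /y'; apply: (le_trans (enormD _ _)); rewrite enormZ gtr0_norm // -/b.
  have F2 : e2 <= E0 + Le * b.
    have := eL 0 th'; rewrite subr0 -/b -/e2 -/E0 => h.
    have := ler_norm (e2 - E0); lra.
  have : e2 * enorm xi <= (E0 + Le * b) * M.
    apply: ler_pM => //; exact: ltW.
  have b0 : 0 <= b by apply: enorm_ge0.
  have := mulr_ge0 (mulr_ge0 E00 M0) b0; have := mulr_ge0 Le0 M0.
  rewrite /C2; nra.
have F6 : enorm u <= (1 + Le * M) * D.
  have -> : u = (th' - th) + (e2 - e1) *: xi.
    by rewrite /u /y /y' scalerBl opprD !addrA; congr (_ + _); rewrite addrAC -!addrA; congr (_ + _); rewrite addrC -addrA addrC. 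
  apply: (le_trans (enormD _ _)); rewrite enormZ -/D.
  have : `|e2 - e1| * enorm xi <= (Le * D) * M by apply: ler_pM.
  nra.
have F6' : enorm u <= 2 * C2 * (1 + b).
  rewrite /u; apply: (le_trans (enormD _ _)); rewrite enormN; nra.
have F7 : `|G y' - G y| <= (A + 3 * K * C2) * (1 + Le * M) * (1 + b) * D.
  have -> : y' = y + u by rewrite /u addrC subrK.
  apply: (le_trans (Gs _ _)).
  have u0 : 0 <= enorm u by apply: enorm_ge0.
  have b0 : 0 <= b by apply: enorm_ge0.
  have : A + K * enorm y + K * enorm u <= (A + 3 * K * C2) * (1 + b).
    have h1 : K * enorm y <= K * (C2 * (1 + b)).
      apply: ler_wpM2l => //; nra.
    have h2 : K * enorm u <= K * (2 * C2 * (1 + b)) by apply: ler_wpM2l.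
    have := mulr_ge0 A0 b0; nra.
  move=> h; have y0 : 0 <= enorm y by apply: enorm_ge0.
  have := ler_pM (addr_ge0 (addr_ge0 A0 (mulr_ge0 K0 y0)) (mulr_ge0 K0 u0)) u0 h F6.
  lra.
have F8 : `|G y| <= C3 * (1 + a) ^+ 2.
  have := Gs 0 y; rewrite add0r enorm0 mulr0 addr0 => h.
  have y0 : 0 <= enorm y by apply: enorm_ge0.
  have h2 : (A + K * enorm y) * enorm y <= (A + K * (C2 * (1 + a))) * (C2 * (1 + a)).
    apply: ler_pM => //; nra.
  have := ler_normD (G y - G 0) (G 0); rewrite subrK.
  have g0 := normr_ge0 (G 0).
  have q1 : `|G 0| <= `|G 0| * (1 + a) ^+ 2.
    rewrite ler_peMr //; nra.
  have q2 : A * C2 * (1 + a) <= A * C2 * (1 + a) ^+ 2.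
    rewrite expr2 mulrA ler_peMr //; [nra | nra].
  rewrite /C3; lra.
have -> : Yn G e th' xi - Yn G e th xi =
    (G y' - G y) / e2 + G y * ((e1 - e2) / (e1 * e2)).
  rewrite /Yn -/e1 -/e2 -/y -/y'; field.
  by rewrite !gt_eqF.
apply: (le_trans (ler_normD _ _)).
rewrite [X in _ <= X]mulrDl; apply: lerD.
  rewrite normrM normrV ?unitfE ?gt_eqF // (gtr0_norm e20) ler_pdivrMr //.
  apply: (le_trans F7).
  have Q0 : 0 <= (A + 3 * K * C2) * (1 + Le * M) / c * D.
    apply: mulr_ge0 => //; apply: divr_ge0; [|exact: ltW].
    apply: mulr_ge0; nra.
  have := ler_wpM2l Q0 ec2.
  have -> : (A + 3 * K * C2) * (1 + Le * M) / c * D * (c * (1 + b)) =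
     (A + 3 * K * C2) * (1 + Le * M) * (1 + b) * D by field; rewrite gt_eqF.
  done.
rewrite normrM normrM normrV ?unitfE ?mulf_neq0 ?gt_eqF // (gtr0_norm (mulr_gt0 e10 e20)).
rewrite distrC.
have H1 : `|G y| * `|e2 - e1| <= C3 * (1 + a) ^+ 2 * (Le * D) by apply: ler_pM.
rewrite mulrA ler_pdivrMr ?mulr_gt0 //.
apply: (le_trans H1).
have ee : c * (1 + a) * (c * (1 + b)) <= e1 * e2 by apply: ler_pM; nra.
have : C3 * Le / c ^+ 2 * D * (c * (1 + a) * (c * (1 + b))) = C3 * Le * D * (1 + a) * (1 + b).
  by field; rewrite gt_eqF.
move=> eq.
have h3 : C3 * (1 + a) ^+ 2 * (Le * D) <= C3 * Le / c ^+ 2 * D * (c * (1 + a) * (c * (1 + b))).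
  rewrite eq; have hX : 0 <= C3 * Le * D * (1 + a).
    by apply: mulr_ge0; [apply: mulr_ge0; [apply: mulr_ge0|]|lra].
  have hb : 1 + a <= 1 + b by lra.
  have := ler_wpM2l hX hb; lra.
apply: (le_trans h3); apply: ler_pM => //.
  apply: mulr_ge0 => //; apply: divr_ge0; [exact: mulr_ge0|exact: sqr_ge0].
apply: mulr_ge0; apply: mulr_ge0; lra.
Qed.
End M.


Section RL.
Context {R : realType}.
Implicit Types (a b c t K n s : R).

Lemma sq_le h1 h2 t : 0 <= h1 -> 0 <= t -> h2 <= (Num.sqrt h1 + t) ^+ 2 ->
  Num.sqrt h2 <= Num.sqrt h1 + t.
Proof.
move=> h10 t0 H; have s0 := sqrtr_ge0 h1.
by apply: (le_trans (ler_wsqrtr H)); rewrite sqrtr_sqr ger0_norm // addr_ge0.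
Qed.

Lemma real_gs K n Gm Gx Gy : 0 < K -> Gm <= Gy ->
  Gy - Gx <= - ((2 * K)^-1 * n ^+ 2) + K * ((2 * K)^-1 * n) ^+ 2 ->
  n ^+ 2 <= 4 * K * (Gx - Gm).
Proof.
move=> K0 h1 h2.
have E : - ((2 * K)^-1 * n ^+ 2) + K * ((2 * K)^-1 * n) ^+ 2 = - (n ^+ 2 / (4 * K)).
  by field; rewrite gt_eqF.
rewrite E in h2.
have : n ^+ 2 / (4 * K) <= Gx - Gm by lra.
by rewrite ler_pdivrMr ?mulr_gt0 // mulrC.
Qed.

Lemma lowb dl K s a : 0 < dl -> 0 < K -> 1 <= s -> 0 <= a ->
  (dl^-1 <= a -> dl ^+ 2 * a ^+ 2 <= 4 * K * s ^+ 2) ->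
  dl / ((1 + dl) * (2 + 4 * K)) * (1 + a) <= s.
Proof.
move=> d0 K0 s1 a0 H; set c := dl / _.
have c0 : 0 < c by rewrite /c divr_gt0 // mulr_gt0 //; lra.
have c1 : c * (1 + dl) * (2 + 4 * K) = dl by rewrite /c; field; apply/andP; split; rewrite gt_eqF //; lra.
have ch : c <= 1 / 2.
  have h : c * (2 + 4 * K) * (1 + dl) <= 1 * (1 + dl) by rewrite mulrAC c1; lra.
  rewrite ler_pM2r in h; last lra.
  nra.
have cK : c ^+ 2 * (16 * K) <= dl ^+ 2.
  rewrite -c1; have : 16 * K <= (2 + 4 * K) ^+ 2 by nra.
  have : 1 <= (1 + dl) ^+ 2 by nra.
  move=> h1 h2.
  have c2 : 0 <= c ^+ 2 by exact: sqr_ge0.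
  have := ler_wpM2l c2 h2.
  have q : 0 <= c ^+2 * (2 + 4 * K) ^+ 2 by apply: mulr_ge0 => //; exact: sqr_ge0.
  have := ler_wpM2l q h1; rewrite !exprMn; nra.
case: (leP dl^-1 a) => ha.
  have := H ha => h.
  have ca : c * a <= s / 2.
    have h3 : (c * a) ^+ 2 <= (s / 2) ^+ 2.
      have : c ^+ 2 * (dl ^+ 2 * a ^+ 2) <= c ^+ 2 * (4 * K * s ^+ 2).
        by apply: ler_wpM2l => //; exact: sqr_ge0.
      have : c ^+ 2 * (16 * K) * a ^+ 2 <= dl ^+ 2 * a ^+ 2.
        by apply: ler_wpM2r => //; exact: sqr_ge0.
      rewrite !exprMn; nra.
    have := mulr_ge0 (ltW c0) a0; nra.
  nra.
have : c * (1 + a) <= c * (1 + dl^-1) by apply: ler_wpM2l; lra.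
have : c * (1 + dl^-1) <= 1.
  have -> : c * (1 + dl^-1) = c * (1 + dl) / dl by field; rewrite gt_eqF.
  rewrite ler_pdivrMr // mul1r; have := c1; nra.
lra.
Qed.

Lemma low_i p cn sg a : 0 < sg -> 0 <= p -> 0 <= cn -> a <= p + cn ->
  (1 + cn + sg)^-1 * (1 + a) <= Num.sqrt (1 + p ^+ 2 / sg ^+ 2).
Proof.
move=> s0 p0 c0 ha; set s := Num.sqrt _.
have s1 : 1 <= s by rewrite -sqrtr1 ler_wsqrtr // lerDl divr_ge0 // sqr_ge0.
have sp : p / sg <= s.
  rewrite -[p / sg]ger0_norm ?divr_ge0 ?(ltW s0) // -sqrtr_sqr ler_wsqrtr //.
  by rewrite expr_div_n lerDr.
have ps : p <= sg * s by rewrite -ler_pdivrMl // mulrC.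
rewrite mulrC ler_pdivrMr; last lra.
nra.
Qed.

Lemma lip_i p q t sg : 0 < sg -> 0 <= p -> 0 <= t -> 0 <= q -> q <= p + t ->
  1 + q ^+ 2 / sg ^+ 2 <= (Num.sqrt (1 + p ^+ 2 / sg ^+ 2) + sg^-1 * t) ^+ 2.
Proof.
move=> s0 p0 t0 q0 hq; set s := Num.sqrt _.
have hs : s ^+ 2 = 1 + (p / sg) ^+ 2 by rewrite sqr_sqrtr ?expr_div_n // addr_ge0 // divr_ge0 // sqr_ge0.
have sp : p / sg <= s.
  rewrite -[p / sg]ger0_norm ?divr_ge0 ?(ltW s0) // -sqrtr_sqr ler_wsqrtr //.
  by rewrite expr_div_n lerDr.
rewrite -expr_div_n.
have : q / sg <= p / sg + sg^-1 * t by rewrite [sg^-1 * t]mulrC -mulrDl ler_pM2r ?invr_gt0.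
have : 0 <= q / sg by apply: divr_ge0 => //; exact: ltW.
have : 0 <= sg^-1 * t by apply: mulr_ge0 => //; rewrite invr_ge0 ltW.
have : 0 <= p / sg by apply: divr_ge0 => //; exact: ltW.
move: (p / sg) (q / sg) (sg^-1 * t) sp hs => P Q T sp hs h1 h2 h3 h4.
nra.
Qed.
End RL.


Section G.
Context {R : realType} {d : nat}.
Variables (G : 'rV[R]_d -> R) (K : R).
Hypothesis dG : forall p, differentiable G p.
Hypothesis K0 : 0 <= K.
Hypothesis GL : forall x y : 'rV[R]_d,
  enorm (gradient G y - gradient G x) <= K * enorm (y - x).

Lemma addBCA (a b : 'rV[R]_d) : a + (b - a) = b.
Proof. by rewrite addrC subrK. Qed.

Lemma grad_near x c v : 0 <= c <= 1 ->
  enorm (gradient G (x + c *: v) - gradient G x) <= K * enorm v.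
Proof.
move=> /andP[c0 c1]; have h := GL x (x + c *: v).
rewrite (_ : x + c *: v - x = c *: v) in h; last by rewrite addrC addKr.
apply: (le_trans h).
rewrite enormZ ger0_norm //; apply: ler_wpM2l => //.
rewrite -[X in _ <= X]mul1r; apply: ler_wpM2r => //; exact: enorm_ge0.
Qed.


Lemma seg x v : `|G (x + v) - G x| <= (enorm (gradient G x) + K * enorm v) * enorm v.
Proof.
have [c c01 ->] := mvt G x v dG.
apply: (le_trans (dot_le (gradient G (x + c *: v)) v)).
apply: ler_wpM2r; first exact: enorm_ge0.
have h1 := grad_near x c v c01.
have h2 := enorm_tri (gradient G x) (gradient G (x + c *: v)).
apply: (le_trans h2); rewrite lerD2l; exact: h1.
Qed.

Lemma descent x v : G (x + v) - G x <= dotv (gradient G x) v + K * enorm v ^+ 2.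
Proof.
have [c c01 ->] := mvt G x v dG.
have -> : gradient G (x + c *: v) = gradient G x + (gradient G (x + c *: v) - gradient G x).
  by rewrite addBCA.
rewrite dotvDl lerD2l.
set w := gradient G (x + c *: v) - gradient G x.
apply: (le_trans (ler_norm (dotv w v))); apply: (le_trans (dot_le w v)).
rewrite expr2 mulrA; apply: ler_wpM2r; first exact: enorm_ge0.
exact: grad_near.
Qed.

Lemma grad_lin y : enorm (gradient G y) <= enorm (gradient G 0) + K * enorm y.
Proof.
have := GL 0 y; rewrite subr0 => h.
apply: (le_trans (enorm_tri (gradient G 0) (gradient G y))); rewrite lerD2l; exact: h.
Qed.

Lemma segA y u : `|G (y + u) - G y| <=
  (enorm (gradient G 0) + K * enorm y + K * enorm u) * enorm u.
Proof.
apply: (le_trans (seg y u)); apply: ler_wpM2r; first exact: enorm_ge0.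
rewrite lerD2r; exact: grad_lin.
Qed.
Lemma seg2 x y : `|G y - G x| <= (enorm (gradient G x) + K * enorm (y - x)) * enorm (y - x).
Proof. by have := seg x (y - x); rewrite (addBCA x y). Qed.

Lemma grad_sq Gm : (forall th, Gm <= G th) -> 0 < K ->
  forall x, enorm (gradient G x) ^+ 2 <= 4 * K * (G x - Gm).
Proof.
move=> Gmin Kp x.
have h := descent x (- (2 * K)^-1 *: gradient G x).
rewrite dotvZr enormZ normrN gtr0_norm ?invr_gt0 ?mulr_gt0 // -enorm_sq mulNr in h.
exact: real_gs (Gmin _) h.
Qed.
End G.


Section H.
Context {R : realType} {d : nat}.

Lemma lip_sym (s : 'rV[R]_d -> R) L :
  (forall x y, s y <= s x + L * enorm (y - x)) ->
  forall x y, `|s y - s x| <= L * enorm (y - x).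
Proof.
move=> H x y; have h1 := H x y; have h2 := H y x; rewrite enormBC in h2.
move: h1 h2; move: (s x) (s y) (L * enorm (y - x)) => a b c h1 h2.
rewrite ler_norml; apply/andP; split; lra.
Qed.

Lemma scale_props (s : 'rV[R]_d -> R) veps L c :
  0 < veps -> (forall x, 1 <= s x) ->
  (forall x y, s y <= s x + L * enorm (y - x)) ->
  (forall x, c * (1 + enorm x) <= s x) ->
  [/\ forall x, 0 < veps * s x,
      forall x y, `|veps * s y - veps * s x| <= (veps * L) * enorm (y - x) &
      forall x, (veps * c) * (1 + enorm x) <= veps * s x].
Proof.
move=> v0 s1 sl sc; split.
- move=> x; apply: mulr_gt0 => //; have := s1 x; lra.
- move=> x y; rewrite -mulrBr normrM gtr0_norm // -mulrA ler_pM2l //.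
  exact: lip_sym.
- by move=> x; rewrite -mulrA ler_pM2l.
Qed.

Lemma case_i veps ctr sg : 0 < veps -> 0 < sg ->
  [/\ forall x : 'rV[R]_d, 0 < eps_i veps ctr sg x,
      forall x y, `|eps_i veps ctr sg y - eps_i veps ctr sg x| <= (veps * sg^-1) * enorm (y - x) &
      forall x, (veps * (1 + enorm ctr + sg)^-1) * (1 + enorm x) <= eps_i veps ctr sg x].
Proof.
move=> v0 s0; rewrite /eps_i; apply: (scale_props (fun x => Num.sqrt (1 + enorm (x - ctr) ^+ 2 / sg ^+ 2))) => //.
- move=> x /=; rewrite -{1}sqrtr1; apply: ler_wsqrtr; rewrite lerDl; apply: divr_ge0; exact: sqr_ge0.
- move=> x y /=; apply: sq_le.
  + by rewrite addr_ge0 // divr_ge0 // sqr_ge0.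
  + by apply: mulr_ge0; [rewrite invr_ge0 ltW | exact: enorm_ge0].
  apply: lip_i => //; try exact: enorm_ge0.
  exact: enorm_tri3.
- move=> x /=; apply: low_i => //; try exact: enorm_ge0.
  by rewrite [_ + enorm ctr]addrC; exact: enorm_tri.
Qed.

Lemma lip_ii (K gn n hx hy : R) : 0 < K -> 0 <= gn -> 0 <= n -> 0 <= hx ->
  gn ^+ 2 <= 4 * K * hx -> hy - hx <= (gn + K * n) * n ->
  hy <= (Num.sqrt hx + Num.sqrt K * n) ^+ 2.
Proof.
move=> K0 g0 n0 h0 hg hh.
have k2 : Num.sqrt K ^+ 2 = K by rewrite sqr_sqrtr // ltW.
have r2 : Num.sqrt hx ^+ 2 = hx by rewrite sqr_sqrtr.
have k0 := sqrtr_ge0 K; have r0 := sqrtr_ge0 hx.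
move: (Num.sqrt K) (Num.sqrt hx) k2 r2 k0 r0 => k r k2 r2 k0 r0.
have gb : gn <= 2 * k * r.
  have : gn ^+ 2 <= (2 * k * r) ^+ 2 by rewrite !exprMn k2 r2; nra.
  have : 0 <= 2 * k * r by nra.
  nra.
have : gn * n <= 2 * k * r * n by apply: ler_wpM2r.
nra.
Qed.

Lemma case_ii veps (G : 'rV[R]_d -> R) K Gm dl :
  (forall p, differentiable G p) -> 0 < K ->
  (forall x y : 'rV[R]_d, enorm (gradient G y - gradient G x) <= K * enorm (y - x)) ->
  0 < veps -> (forall th, Gm <= G th) -> 0 < dl ->
  (forall th : 'rV[R]_d, dl^-1 <= enorm th -> dl * enorm th <= enorm (gradient G th)) ->
  [/\ forall x : 'rV[R]_d, 0 < eps_ii veps G Gm x,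
      forall x y, `|eps_ii veps G Gm y - eps_ii veps G Gm x| <= (veps * Num.sqrt K) * enorm (y - x) &
      forall x, (veps * (dl / ((1 + dl) * (2 + 4 * K)))) * (1 + enorm x) <= eps_ii veps G Gm x].
Proof.
move=> dG K0 GL v0 Gmin dl0 gro.
have gs := @grad_sq _ _ G K dG (ltW K0) GL Gm Gmin K0.
have h1 : forall x, 1 <= 1 + G x - Gm by move=> x; have := Gmin x; lra.
rewrite /eps_ii; apply: (scale_props (fun x => Num.sqrt (1 + G x - Gm))) => //.
- by move=> x /=; rewrite -{1}sqrtr1 ler_wsqrtr.
- move=> x y /=; apply: sq_le.
  + by have := h1 x; lra.
  + by apply: mulr_ge0; [exact: sqrtr_ge0 | exact: enorm_ge0].
  apply: (@lip_ii K (enorm (gradient G x)) (enorm (y - x))) => //; try exact: enorm_ge0.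
  + by have := h1 x; lra.
  + by have := gs x; have := Gmin x; lra.
  + have := @seg2 _ _ G K dG (ltW K0) GL x y.
    move=> h; have := ler_norm (G y - G x); lra.
- move=> x /=; apply: lowb => //.
  + by rewrite -{1}sqrtr1; apply: ler_wsqrtr.
  + exact: enorm_ge0.
  move=> hx; rewrite (sqr_sqrtr (le_trans ler01 (h1 x))).
  have := gro x hx => h.
  have : (dl * enorm x) ^+ 2 <= enorm (gradient G x) ^+ 2.
    by rewrite ler_sqr ?nnegrE ?mulr_ge0 ?enorm_ge0 // ltW.
  have := gs x; rewrite exprMn; nra.
Qed.
End H.


Theorem proposition3p1 (R : realType) (d : nat) (G : 'rV[R]_d -> R)
  (veps : R) (eps : 'rV[R]_d -> R) :
  (forall th : 'rV[R]_d, differentiable G th) ->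
  (exists K : R, forall th th' : 'rV[R]_d,
      enorm (gradient G th' - gradient G th) <= K * enorm (th' - th)) ->
  0 < veps ->
  ((exists (thctr : 'rV[R]_d) (sigp : R), 0 < sigp /\ eps = eps_i veps thctr sigp)
   \/
   (exists Gminus : R,
      (forall th, Gminus <= G th) /\
      (exists delta : R, 0 < delta /\
         forall th : 'rV[R]_d, delta^-1 <= enorm th ->
           delta * enorm th <= enorm (gradient G th)) /\
      eps = eps_ii veps G Gminus)) ->
  forall S : set 'rV[R]_d,
    (exists M : R, forall xi, S xi -> enorm xi <= M) ->
    exists L : R, forall (th th' xi : 'rV[R]_d), S xi ->
      `|Yn G eps th' xi - Yn G eps th xi| <= L * enorm (th' - th).
Proof.
move=> dG [K0 GL0] v0 Hcase S [M SM].
pose K := `|K0| + 1.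
have Kp : 0 < K by rewrite /K; have := normr_ge0 K0; lra.
have GL : forall x y : 'rV[R]_d, enorm (gradient G y - gradient G x) <= K * enorm (y - x).
  move=> x y; apply: (le_trans (GL0 x y)); apply: ler_wpM2r; first exact: enorm_ge0.
  rewrite /K; have := ler_norm K0; lra.
have Gs := @segA _ _ G K dG (ltW Kp) GL.
have A0 : 0 <= enorm (gradient G 0) by exact: enorm_ge0.
have M0 : 0 <= `|M| by exact: normr_ge0.
have fin : forall Le c, 0 <= Le -> 0 < c ->
    (forall x, 0 < eps x) -> (forall x y, `|eps y - eps x| <= Le * enorm (y - x)) ->
    (forall x, c * (1 + enorm x) <= eps x) ->
    exists L : R, forall (th th' xi : 'rV[R]_d), S xi ->
      `|Yn G eps th' xi - Yn G eps th xi| <= L * enorm (th' - th).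
  move=> Le c Le0 c0 ep eL ec.
  have [L HL] := @main_abs R d G eps _ _ _ _ _ A0 (ltW Kp) Le0 c0 M0 ep eL ec Gs.
  exists L => th th' xi Sxi; apply: HL.
  exact: le_trans (SM _ Sxi) (ler_norm M).
case: Hcase => [[ctr [sg [s0 E]]] | [Gm [Gmin [[dl [dl0 gro]] E]]]].
  have [ep eL ec] := @case_i R d veps ctr sg v0 s0.
  rewrite -E in ep eL ec.
  apply: (fin _ _ _ _ ep eL ec).
    by apply: mulr_ge0; [exact: ltW | rewrite invr_ge0 ltW].
  apply: mulr_gt0 => //; rewrite invr_gt0; have := enorm_ge0 ctr; lra.
have [ep eL ec] := @case_ii R d veps G K Gm dl dG Kp GL v0 Gmin dl0 gro.
rewrite -E in ep eL ec.
apply: (fin _ _ _ _ ep eL ec).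
  by apply: mulr_ge0; [exact: ltW | exact: sqrtr_ge0].
apply: mulr_gt0 => //; apply: divr_gt0 => //; apply: mulr_gt0; lra.
Qed.
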